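(* Consider the power network system described in the context, and let the switching vector $\sigma$ be held at an arbitrary constant value in $\{0,1\}^{|\tilde{\mathcal L}|}$. Then every equilibrium $(\eta^*,\omega^*,p^{M,*},p^{c,*},\psi^* )$ of the system satisfies $\omega^*=\mathbf 0_{|\mathcal N|}$ and $p^{c,*}\in\operatorname{Im}(\mathbf 1_{|\mathcal N|})$, i.e. $p^{c,*}_1=\dots=p^{c,*}_{|\mathcal N|}$.
   Context: Let $(\mathcal N,\mathcal E)$ be a connected directed graph (the power network) with bus set $\mathcal N=\{1,\dots,|\mathcal N|\}$ and line set $\mathcal E\subseteq\mathcal N\times\mathcal N$, oriented arbitrarily so that $(i,j)\in\mathcal E$ implies $(j,i)\notin\mathcal E$; write $\mathcal N^p_j=\{k:(k,j)\in\mathcal E\}$ and $\mathcal N^s_j=\{k:(j,k)\in\mathcal E\}$. Let $(\mathcal N,\tilde{\mathcal E})$ be a connected directed graph (the communication network) on the same vertex set. For each $j\in\mathcal N$ let $\mathcal L_j$ be a finite set of on-off loads at bus $j$ and $\tilde{\mathcal L}=\{(l,j): l\in\mathcal L_j,\ j\in\mathcal N\}$; each load $(l,j)$ has magnitude $\overline d_{l,j}>0$ and switching state $\sigma_{l,j}\in\{0,1\}$. Constants: $M_j,\gamma_j,\kappa_j,A_j,\tau_j>0$ and $p^L_j\in\mathbb R$ for $j\in\mathcal N$; $B_{ij}>0$ for $(i,j)\in\mathcal E$; $\tau_{ij}>0$ for $(i,j)\in\tilde{\mathcal E}$. The state is $x=(\eta,\omega,p^M,p^c,\psi)$ with $\eta=(\eta_{ij})_{(i,j)\in\mathcal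 E}$, $\omega,p^M,p^c\in\mathbb R^{|\mathcal N|}$, $\psi=(\psi_{ij})_{(i,j)\in\tilde{\mathcal E}}$, and the dynamics are $\dot\eta_{ij}=\omega_i-\omega_j$ for $(i,j)\in\mathcal E$; $M_j\dot\omega_j=p^M_j-p^L_j-d^u_j-\sum_{l\in\mathcal L_j}d^c_{l,j}-\sum_{k\in\mathcal N^s_j}p_{jk}+\sum_{i\in\mathcal N^p_j}p_{ij}$ for $j\in\mathcal N$; $p_{ij}=B_{ij}\eta_{ij}$; $\gamma_j\dot p^M_j=-(p^M_j+\kappa_j\omega_j-\kappa_jp^c_j)$; $d^u_j=A_j\omega_j$; $d^c_{l,j}=\overline d_{l,j}\sigma_{l,j}$; $\tau_{ij}\dot\psi_{ij}=p^c_i-p^c_j$ for $(i,j)\in\tilde{\mathcal E}$; $\tau_j\dot p^c_j=-p^M_j+p^L_j+\sum_{l\in\mathcal L_j}d^c_{l,j}-\sum_{k:(j,k)\in\tilde{\mathcal E}}\psi_{jk}+\sum_{i:(i,j)\in\tilde{\mathcal E}}\psi_{ij}$ for $j\in\mathcal N$. An equilibrium (for fixed $\sigma$) is a state at which all time derivatives vanish. *)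

(* Defs.v *)
From HB Require Import structures.
From mathcomp Require Import all_boot all_order all_algebra.
Set Implicit Arguments. Unset Strict Implicit. Unset Printing Implicit Defensive.
Import Order.TTheory GRing.Theory Num.Theory.
Local Open Scope ring_scope.

(* Loads form a finite
   type Ld, each load l being located at bus (bus l); the load (l,j) of the
   paper corresponds to l with bus l = j. *)

Definition weakly_connected (n : nat) (E : rel 'I_n) : Prop :=
  forall i j : 'I_n, connect (fun a b => E a b || E b a) i j.

Definition dctrl (R : pzRingType) (Ld : finType) (dbar : Ld -> R) (sigma : Ld -> bool)
  (l : Ld) : R := dbar l * (sigma l)%:R.

Section Dyn.
Variables (R : realFieldType) (n : nat) (E Et : rel 'I_n) (Ld : finType)
  (bus : Ld -> 'I_n) (dbar : Ld -> R) (sigma : Ld -> bool)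
  (M gamma kappa A tau pL : 'I_n -> R) (B tau2 : 'I_n -> 'I_n -> R).

(* state: eta (used on E), omega, pM, pc, psi (used on Et) *)
Variables (eta : 'I_n -> 'I_n -> R) (omega pM pc : 'I_n -> R) (psi : 'I_n -> 'I_n -> R).

Definition eta_dot (i j : 'I_n) : R := omega i - omega j.

Definition omega_dot (j : 'I_n) : R :=
  (pM j - pL j - A j * omega j - \sum_(l | bus l == j) dctrl dbar sigma l
   - \sum_(k | E j k) B j k * eta j k + \sum_(i | E i j) B i j * eta i j) / M j.

Definition pM_dot (j : 'I_n) : R :=
  - (pM j + kappa j * omega j - kappa j * pc j) / gamma j.

Definition psi_dot (i j : 'I_n) : R := (pc i - pc j) / tau2 i j.

Definition pc_dot (j : 'I_n) : R :=
  (- pM j + pL j + \sum_(l | bus l == j) dctrl dbar sigma l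
   - \sum_(k | Et j k) psi j k + \sum_(i | Et i j) psi i j) / tau j.

Definition is_equilibrium : Prop :=
  [/\ (forall i j, E i j -> eta_dot i j = 0),
      (forall j, omega_dot j = 0),
      (forall j, pM_dot j = 0),
      (forall i j, Et i j -> psi_dot i j = 0) &
      (forall j, pc_dot j = 0)].
End Dyn.

(* Main.v *)
Require Import Defs.
From HB Require Import structures.
From mathcomp Require Import all_boot all_order all_algebra.
From mathcomp Require Import ring lra.
Import Order.TTheory GRing.Theory Num.Theory.
Local Open Scope ring_scope.

Lemma conn_const (R : realFieldType) (n : nat) (e : rel 'I_n) (f : 'I_n -> R) :
  weakly_connected e -> (forall a b, e a b -> f a = f b) -> forall i j, f i = f j.
Proof.
move=> hc H i j; have /connectP [p] := hc i j.
elim: p i => [|y p IH] i /=; first by move=> _ ->.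
case/andP=> /orP [eiy|eyi] pth hl.
  by rewrite (H _ _ eiy); apply: IH.
by rewrite -(H _ _ eyi); apply: IH.
Qed.

Lemma exch (R : realFieldType) (n : nat) (e : rel 'I_n) (F : 'I_n -> 'I_n -> R) :
  \sum_j \sum_(k | e j k) F j k = \sum_j \sum_(i | e i j) F i j.
Proof.
under eq_bigr do rewrite big_mkcond.
rewrite exchange_big /=.
by apply: eq_bigr => j _; rewrite [RHS]big_mkcond.
Qed.

Lemma divr0_num (R : realFieldType) (x y : R) : 0 < y -> x / y = 0 -> x = 0.
Proof.
move=> hy /eqP; rewrite mulf_eq0 invr_eq0 => /orP [/eqP //|/eqP h].
by move: hy; rewrite h ltxx.
Qed.

Theorem lemma1 (R : realFieldType) (n : nat) (E Et : rel 'I_n)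
  (Ld : finType) (bus : Ld -> 'I_n) (dbar : Ld -> R)
  (M gamma kappa A tau pL : 'I_n -> R) (B tau2 : 'I_n -> 'I_n -> R)
  (hE_orient : forall i j, E i j -> ~~ E j i)
  (hE_conn : weakly_connected E) (hEt_conn : weakly_connected Et)
  (hdbar : forall l, 0 < dbar l)
  (hM : forall j, 0 < M j) (hgamma : forall j, 0 < gamma j)
  (hkappa : forall j, 0 < kappa j) (hA : forall j, 0 < A j)
  (htau : forall j, 0 < tau j)
  (hB : forall i j, E i j -> 0 < B i j)
  (htau2 : forall i j, Et i j -> 0 < tau2 i j)
  (sigma : Ld -> bool)
  (eta : 'I_n -> 'I_n -> R) (omega pM pc : 'I_n -> R) (psi : 'I_n -> 'I_n -> R) :
  is_equilibrium E Et bus dbar sigma M gamma kappa A tau pL B tau2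
    eta omega pM pc psi ->
  (forall j, omega j = 0) /\ (exists c : R, forall j, pc j = c).
Proof.
case=> heta hom _ hpsi hpc.
have Hw : forall i j, omega i = omega j.
  apply: (@conn_const R n E omega hE_conn) => a b hab.
  by apply/eqP; rewrite -subr_eq0; apply/eqP; have := heta _ _ hab.
have Hc : forall i j, pc i = pc j.
  apply: (@conn_const R n Et pc hEt_conn) => a b hab.
  apply/eqP; rewrite -subr_eq0; apply/eqP.
  have := hpsi _ _ hab; rewrite /psi_dot; exact: divr0_num (htau2 _ _ hab).
split; last first.
  have [j1 _|hn] := pickP (fun _ : 'I_n => true).
    by exists (pc j1) => j; apply: Hc.
  by exists 0 => j; move: (hn j).
move=> j0.
set w := omega j0.
set D := fun j => \sum_(l | bus l == j) dctrl dbar sigma l.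
have h1 : forall j, pM j - pL j - A j * w - D j
   - \sum_(k | E j k) B j k * eta j k + \sum_(i | E i j) B i j * eta i j = 0.
  move=> j; rewrite /w -(Hw j j0); have := hom j; rewrite /omega_dot; exact: divr0_num (hM j).
have h2 : forall j, - pM j + pL j + D j
   - \sum_(k | Et j k) psi j k + \sum_(i | Et i j) psi i j = 0.
  move=> j; have := hpc j; rewrite /pc_dot; exact: divr0_num (htau j).
have hs : \sum_j (- (A j * w) - \sum_(k | E j k) B j k * eta j k
   + \sum_(i | E i j) B i j * eta i j
   - \sum_(k | Et j k) psi j k + \sum_(i | Et i j) psi i j) = 0.
  apply: big1 => j _; have := h1 j; have := h2 j; lra.
rewrite !big_split /= !sumrN (exch _ _ E) (exch _ _ Et) in hs.
rewrite subrK addrNK -mulr_suml in hs.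
have : (\sum_j A j) * w = 0 by rewrite -[LHS]opprK hs oppr0.
move/eqP; rewrite mulf_eq0 => /orP [|/eqP //].
have : 0 < \sum_j A j.
  rewrite (bigD1 j0) //=; apply: (lt_le_trans (hA j0)); rewrite lerDl.
  by apply: sumr_ge0 => i _; apply: ltW.
by move=> h /eqP h'; move: h; rewrite h' ltxx.
Qed.
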